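(* Let $A$, $c$, $B$ be as in the context, let $b\in\mathbb NA$, let $u\in\mathbb N^n$ with $Au=b$, and let $\tau\subseteq\{1,\dots,n\}$ be arbitrary. The group relaxation $G^\tau(b)$, i.e. the program $$\min\{(-cB)\cdot z : B^{\bar\tau}z\le\pi_\tau(u),\ z\in\mathbb Z^{n-d}\},$$ has a finite optimal solution if and only if $\tau$ is a face of $\Delta_c$.
   Context: $A\in\mathbb Z^{d\times n}$ has rank $d$, columns $a_1,\dots,a_n$, $cone(A)$ is pointed, $\{x\in\mathbb R^n_{\ge0}:Ax=0\}=\{0\}$, $\mathbb ZA=\mathbb Z^d$, and $\mathbb NA=\{Au:u\in\mathbb N^n\}$. The regular subdivision $\Delta_c$ of $cone(A)$ with respect to $c\in\mathbb Z^n$ is the collection of index sets $\sigma\subseteq\{1,\dots,n\}$ such that there exists $y\in\mathbb R^d$ with $y\cdot a_j=c_j$ for $j\in\sigma$ and $y\cdot a_j<c_j$ for $j\notin\sigma$; $c$ is assumed generic, meaning $\Delta_c$ is a triangulation of $cone(A)$. $B\in\mathbb Z^{n\times(n-d)}$ is a matrix whose columns form a basis of the lattice $\{x\in\mathbb Z^n:Ax=0\}$. For $\tau\subseteq\{1,\dots,n\}$ with complement $\bar\tau$, $B^{\bar\tau}$ is the submatrix of $B$ obtained by deleting the rows indexed by $\tau$, and $\pi_\tau:\mathbb R^n\to\mathbb R^{|\bar\tau|}$ deletes the coordinates indexed by $\tau$. (For $\tau$ a face of $\Delta_c$ this program is equivalent to Gomory's group relaxation $\min\{\tilde c_{\bar\tau}\cdot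 x_{\bar\tau}: A_\tau x_\tau+A_{\bar\tau}x_{\bar\tau}=b,\ x_{\bar\tau}\ge0,\ x\in\mathbb Z^n\}$, where $\tilde c_{\bar\tau}$ is $c_{\bar\sigma}-c_\sigma A_\sigma^{-1}A_{\bar\sigma}$ extended by zeros for a maximal face $\sigma\supseteq\tau$; for arbitrary $\tau$ the group relaxation is defined by the displayed program.) *)

(* Defs.v *)
From HB Require Import structures.
From mathcomp Require Import all_boot all_order all_algebra.
From mathcomp Require Import reals.
Set Implicit Arguments. Unset Strict Implicit. Unset Printing Implicit Defensive.
Import Order.TTheory GRing.Theory Num.Theory.
Local Open Scope ring_scope.

Definition realmx (R : realType) (m k : nat) (M : 'M[int]_(m, k)) : 'M[R]_(m, k) :=
  map_mx (fun z : int => z%:~R) M.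

Definition full_row_rank (R : realType) (d n : nat) (A : 'M[int]_(d, n)) : Prop :=
  \rank (realmx R A) = d.

(* cone(A) = { A x : x in R^n_{>=0} } is pointed: contains no line *)
Definition cone_pointed (R : realType) (d n : nat) (A : 'M[int]_(d, n)) : Prop :=
  forall x y : 'cV[R]_n, (forall j, 0 <= x j 0) -> (forall j, 0 <= y j 0) ->
    realmx R A *m x = - (realmx R A *m y) -> realmx R A *m x = 0.

Definition ker_nonneg_trivial (R : realType) (d n : nat) (A : 'M[int]_(d, n)) : Prop :=
  forall x : 'cV[R]_n, (forall j, 0 <= x j 0) -> realmx R A *m x = 0 -> x = 0.

Definition lattice_spanning (d n : nat) (A : 'M[int]_(d, n)) : Prop :=
  forall v : 'cV[int]_d, exists x : 'cV[int]_n, A *m x = v.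

Definition in_NA (d n : nat) (A : 'M[int]_(d, n)) (b : 'cV[int]_d) : Prop :=
  exists u : 'cV[int]_n, (forall j, 0 <= u j 0) /\ A *m u = b.

Definition face_Delta (R : realType) (d n : nat) (A : 'M[int]_(d, n))
    (c : 'rV[int]_n) (sigma : {set 'I_n}) : Prop :=
  exists y : 'rV[R]_d, forall j : 'I_n,
    (j \in sigma -> (y *m col j (realmx R A)) 0 0 = (c 0 j)%:~R) /\
    (j \notin sigma -> (y *m col j (realmx R A)) 0 0 < (c 0 j)%:~R).

(* c generic: Delta_c is a triangulation, i.e. every face sigma of Delta_c
   is simplicial: the columns a_j, j in sigma, are linearly independent. *)
Definition generic_cost (R : realType) (d n : nat) (A : 'M[int]_(d, n))
    (c : 'rV[int]_n) : Prop :=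
  forall sigma : {set 'I_n}, face_Delta R A c sigma ->
    forall lam : 'cV[R]_n, (forall j, j \notin sigma -> lam j 0 = 0) ->
      realmx R A *m lam = 0 -> lam = 0.

Definition kernel_lattice_basis (d n k : nat) (A : 'M[int]_(d, n))
    (B : 'M[int]_(n, k)) : Prop :=
  [/\ A *m B = 0,
      (forall x : 'cV[int]_n, A *m x = 0 -> exists z : 'cV[int]_k, x = B *m z) &
      (forall z : 'cV[int]_k, B *m z = 0 -> z = 0)].

Definition grp_feasible (n k : nat) (B : 'M[int]_(n, k)) (u : 'cV[int]_n)
    (tau : {set 'I_n}) (z : 'cV[int]_k) : Prop :=
  forall j : 'I_n, j \notin tau -> (B *m z) j 0 <= u j 0.

Definition grp_obj (n k : nat) (c : 'rV[int]_n) (B : 'M[int]_(n, k))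
    (z : 'cV[int]_k) : int :=
  ((- (c *m B)) *m z) 0 0.

Definition grp_has_finite_opt (n k : nat) (c : 'rV[int]_n) (B : 'M[int]_(n, k))
    (u : 'cV[int]_n) (tau : {set 'I_n}) : Prop :=
  exists z : 'cV[int]_k, grp_feasible B u tau z /\
    forall z' : 'cV[int]_k, grp_feasible B u tau z' -> grp_obj c B z <= grp_obj c B z'.

(* Main.v *)
From HB Require Import structures.
From mathcomp Require Import all_boot all_order all_algebra.
From mathcomp Require Import reals.
From mathcomp Require Import ring lra.
Require Import Defs.
From Stdlib Require Import Classical.
Set Implicit Arguments. Unset Strict Implicit. Unset Printing Implicit Defensive.
Import Order.TTheory GRing.Theory Num.Theory.
Local Open Scope ring_scope.

Section FM.
Variable F : realFieldType.

Lemma sum_delta (I : finType) (i : I) (f : I -> F) :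
  \sum_j (j == i)%:R * f j = f i.
Proof.
rewrite (bigD1 i) //= eqxx mul1r big1 ?addr0 // => j /negbTE ->; by rewrite mul0r.
Qed.

Lemma sum_delta' (I : finType) (i : I) (c : F) (f : I -> F) :
  \sum_j (j == i)%:R * c * f j = c * f i.
Proof.
rewrite (bigD1 i) //= eqxx mul1r big1 ?addr0 // => j /negbTE ->; by rewrite !mul0r.
Qed.

Lemma sum_exch (I J : finType) (lam : J -> F) (co : J -> I -> F) (f : I -> F) :
  \sum_i (\sum_j lam j * co j i) * f i = \sum_j lam j * \sum_i co j i * f i.
Proof.
under eq_bigr do rewrite mulr_suml.
rewrite exchange_big /=; apply: eq_bigr => j _.
rewrite mulr_sumr; apply: eq_bigr => i _; by rewrite mulrA.
Qed.

Lemma between (sL sU : seq F) :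
  (forall l u, l \in sL -> u \in sU -> l <= u) ->
  exists x, (forall l, l \in sL -> l <= x) /\ (forall u, u \in sU -> x <= u).
Proof.
elim: sL => [|l sL IH] H.
  elim: sU {H} => [|u sU IHu]; first by exists 0.
  case: IHu => x [_ Hx]; exists (Num.min u x); split => // v.
  rewrite inE => /orP [/eqP -> | Hv]; rewrite ge_min ?lexx //.
  by rewrite (Hx v Hv) orbT.
case: IH => [l' u Hl Hu|x [Hx1 Hx2]]; first by apply: H => //; rewrite inE Hl orbT.
exists (Num.max l x); split => [v|u Hu].
  rewrite inE => /orP [/eqP -> | Hv]; rewrite le_max ?lexx //.
  by rewrite (Hx1 v Hv) orbT.
by rewrite ge_max (Hx2 u Hu) andbT; apply: H => //; rewrite inE eqxx.
Qed.

Lemma fm_pair (al be X Y bp sp bq sq : F) : 0 < al -> be < 0 ->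
 X * be = bq - sq -> Y * al = bp - sp -> - be * sp + al * sq <= - be * bp + al * bq -> X <= Y.
Proof.
move=> Ha Hb EX EY H.
rewrite -subr_ge0 -(nmulr_rle0 _ (_ : al * be < 0)); last by rewrite pmulr_rlt0.
have -> : al * be * (Y - X) = be * (Y * al) - al * (X * be) by ring.
rewrite EX EY; lra.
Qed.

Lemma FM (k : nat) : forall (I : finType) (a : I -> 'I_k -> F) (b : I -> F),
  (forall r : 'I_k -> F, ~ (forall i, \sum_l a i l * r l <= b i)) ->
  exists lam : I -> F, [/\ (forall i, 0 <= lam i),
     (forall l, \sum_i lam i * a i l = 0) & \sum_i lam i * b i < 0].
Proof.
elim: k => [|k IH] I a b H.
  case: (pickP (fun i => b i < 0)) => [i Hi|Hno].
    exists (fun j => (j == i)%:R); split.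
    - by move=> j; case: (j == i).
    - by move=> [].
    - by rewrite sum_delta.
  exfalso; apply: (H (fun _ => 0)) => i; rewrite big_ord0.
  by move: (Hno i) => /negbT; rewrite -leNgt.
pose co (j : I + (I * I)) (i : I) : F :=
  match j with
  | inl i0 => ((i == i0) && (a i0 ord0 == 0))%:R
  | inr (p, q) => if (0 < a p ord0) && (a q ord0 < 0) then
        (i == p)%:R * (- a q ord0) + (i == q)%:R * a p ord0 else 0
  end.
have co_ge0 j i : 0 <= co j i.
  rewrite /co; case: j => [i0|[p q]] /=; first by case: (_ && _).
  case: ifP => // /andP [Hp Hq].
  apply: addr_ge0; apply: mulr_ge0; try by case: (_ == _).
    by rewrite oppr_ge0 ltW. by rewrite ltW.
have co0 j : \sum_i co j i * a i ord0 = 0.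
  rewrite /co; case: j => [i0|[p q]] /=.
    case: (eqVneq (a i0 ord0) 0) => [E|E].
      by rewrite big1 // => i _; case: (eqVneq i i0) => [->|]; rewrite ?E ?mulr0 ?mul0r.
    by rewrite big1 // => i _; rewrite andbF mul0r.
  case: ((0 < a p ord0) && (a q ord0 < 0)); last by rewrite big1 // => i _; rewrite mul0r.
  under eq_bigr do rewrite mulrDl.
  by rewrite big_split /= !sum_delta' mulrC mulrN addNr.
pose a' j (l : 'I_k) := \sum_i co j i * a i (lift ord0 l).
pose b' j := \sum_i co j i * b i.
have [|lam' [L1 L2 L3]] := IH _ a' b'.
  move=> r' Hr'.
  pose s i := \sum_l a i (lift ord0 l) * r' l.
  have Hs j : \sum_i co j i * s i <= b' j.
    apply: le_trans (Hr' j); rewrite le_eqVlt; apply/orP; left; apply/eqP.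
    rewrite /a' /s.
    under [X in _ = X]eq_bigr do rewrite mulr_suml.
    rewrite exchange_big /=; apply: eq_bigr => i _.
    rewrite mulr_sumr; apply: eq_bigr => l _; by rewrite mulrA.
  pose sL := [seq (b q - s q) / a q ord0 | q <- enum I & a q ord0 < 0].
  pose sU := [seq (b p - s p) / a p ord0 | p <- enum I & 0 < a p ord0].
  have [|x [Hx1 Hx2]] := @between sL sU.
    move=> l u /mapP [q]; rewrite mem_filter => /andP [Hq _] ->.
    move=> /mapP [p]; rewrite mem_filter => /andP [Hp _] ->.
    have := Hs (inr (p, q)); rewrite /b' /co /= Hp Hq /=.
    under eq_bigr do rewrite mulrDl.
    rewrite big_split /= !sum_delta'.
    under eq_bigr do rewrite mulrDl.
    rewrite big_split /= !sum_delta' => Hpq.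
    set X := (b q - s q) / a q ord0; set Y := (b p - s p) / a p ord0.
    have EX : X * a q ord0 = b q - s q by rewrite /X mulfVK // ltr0_neq0.
    have EY : Y * a p ord0 = b p - s p by rewrite /Y mulfVK // lt0r_neq0.
    exact: (fm_pair Hp Hq EX EY Hpq).
  apply: (H (fun l => if unlift ord0 l is Some l' then r' l' else x)) => i.
  rewrite big_ord_recl /= unlift_none.
  under eq_bigr do rewrite liftK.
  rewrite -/(s i).
  case: (ltgtP (a i ord0) 0) => Hi.
  - have Hin : (b i - s i) / a i ord0 \in sL.
      by apply/mapP; exists i => //; rewrite mem_filter Hi mem_enum.
    have := Hx1 _ Hin; rewrite -(ler_nM2l Hi) [a i ord0 * (_ / _)]mulrC mulfVK ?ltr0_neq0 //.
    by rewrite lerBrDr.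
  - have Hin : (b i - s i) / a i ord0 \in sU.
      by apply/mapP; exists i => //; rewrite mem_filter Hi mem_enum.
    have := Hx2 _ Hin; rewrite -(ler_pM2l Hi) [a i ord0 * (_ / _)]mulrC mulfVK ?lt0r_neq0 //.
    by rewrite lerBrDr.
  - have := Hs (inl i); rewrite /co /b' /=.
    under eq_bigr do rewrite Hi eqxx andbT.
    under [X in _ <= X -> _]eq_bigr do rewrite Hi eqxx andbT.
    by rewrite !sum_delta Hi mul0r add0r.
exists (fun i => \sum_j lam' j * co j i); split.
- by move=> i; apply: sumr_ge0 => j _; apply: mulr_ge0.
- move=> l; rewrite sum_exch; case: (unliftP ord0 l) => [l'|] ->.
    exact: L2.
  by rewrite big1 // => j _; rewrite co0 mulr0.
- by rewrite sum_exch.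
Qed.
Lemma farkas (k : nat) (I : finType) (a : I -> 'I_k -> F) (g : 'I_k -> F) :
 (forall r : 'I_k -> F, (forall i, \sum_l a i l * r l <= 0) -> \sum_l g l * r l <= 0) ->
 exists lam : I -> F, (forall i, 0 <= lam i) /\ forall l, \sum_i lam i * a i l = g l.
Proof.
move=> H.
pose a2 (j : I + 'I_1) l := match j with inl i => a i l | inr _ => - g l end.
pose b2 (j : I + 'I_1) : F := match j with inl _ => 0 | inr _ => -1 end.
have [r Hr|lam [L1 L2 L3]] := @FM k _ a2 b2.
  have := H r (fun i => Hr (inl i)).
  have := Hr (inr ord0); rewrite /a2 /b2.
  under eq_bigr do rewrite mulNr.
  rewrite sumrN lerNl opprK => H1 H2.
  by have := le_trans H1 H2; rewrite ler10.
move: L3; rewrite big_sumType big_ord1 /= big1 ?add0r; last by move=> i _; rewrite mulr0.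
rewrite mulrN1 oppr_lt0 => Hs.
exists (fun i => lam (inl i) / lam (inr ord0)); split.
  by move=> i; apply: divr_ge0 => //; apply: ltW.
move=> l; move: (L2 l); rewrite big_sumType big_ord1 /= => E.
under eq_bigr do rewrite mulrAC.
rewrite -mulr_suml; apply: (@mulIf _ (lam (inr ord0))); first by rewrite lt0r_neq0.
rewrite mulfVK ?lt0r_neq0 //; apply/eqP; rewrite -subr_eq0; apply/eqP; by rewrite -[RHS]E mulrN mulrC.
Qed.

End FM.

Lemma small_pos_seq (F : realFieldType) (s : seq F) :
  (forall x, x \in s -> 0 < x) -> exists e, 0 < e /\ forall x, x \in s -> e <= x.
Proof.
elim: s => [|x s IH] H; first by exists 1; split.
case: IH => [y Hy|e [He1 He2]]; first by apply: H; rewrite inE Hy orbT.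
have Hx : 0 < x by apply: H; rewrite inE eqxx.
exists (Num.min x e); split; first by rewrite lt_min Hx He1.
move=> z; rewrite inE => /orP [/eqP ->|Hz]; rewrite ge_min ?lexx //.
by rewrite He2 ?orbT.
Qed.

Lemma small_pos (F : realFieldType) (I : finType) (P : pred I) (f : I -> F) :
  (forall i, P i -> 0 < f i) -> exists e, 0 < e /\ forall i, P i -> e <= f i.
Proof.
move=> H.
have [|e [He1 He2]] := @small_pos_seq F [seq f i | i <- enum I & P i].
  by move=> x /mapP [i]; rewrite mem_filter => /andP [Hi _] ->; apply: H.
exists e; split => // i Hi; apply: He2; apply/mapP; exists i => //.
by rewrite mem_filter Hi mem_enum.
Qed.

Lemma intr_mul (R : pzRingType) m p q (M : 'M[int]_(m, p)) (N : 'M[int]_(p, q)) i j :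
  ((M *m N) i j)%:~R = \sum_l (M i l)%:~R * (N l j)%:~R :> R.
Proof. by rewrite mxE rmorph_sum; apply: eq_bigr => l _; rewrite rmorphM. Qed.

Lemma mxBE (R : zmodType) m n (X Y : 'M[R]_(m,n)) i j : (X - Y) i j = X i j - Y i j.
Proof. by rewrite !mxE. Qed.
Lemma mxNE (R : zmodType) m n (X : 'M[R]_(m,n)) i j : (- X) i j = - X i j.
Proof. by rewrite !mxE. Qed.
Lemma mxDE (R : zmodType) m n (X Y : 'M[R]_(m,n)) i j : (X + Y) i j = X i j + Y i j.
Proof. by rewrite !mxE. Qed.

Lemma mul_col (R : pzSemiRingType) m p q (A : 'M[R]_(m, p)) (B : 'M[R]_(p, q)) j :
  A *m col j B = col j (A *m B).
Proof. by apply/matrixP => i k; rewrite !mxE; apply: eq_bigr => l _; rewrite !mxE. Qed.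

Lemma colval (R : realType) d n (A : 'M[int]_(d, n)) (y : 'rV[R]_d) j :
  (y *m col j (realmx R A)) 0 0 = (y *m realmx R A) 0 j.
Proof. by rewrite mul_col mxE. Qed.

Lemma face_opt (R : realType) d n k (A : 'M[int]_(d,n)) (c : 'rV[int]_n)
  (B : 'M[int]_(n,k)) (b : 'cV[int]_d) (u : 'cV[int]_n) (tau : {set 'I_n}) :
  A *m B = 0 -> (forall j, 0 <= u j 0) -> A *m u = b ->
  face_Delta R A c tau -> grp_has_finite_opt c B u tau.
Proof.
move=> AB0 u0 Aub [y Hy].
pose rho : R := \sum_p y 0 p * (b p 0)%:~R - ((c *m u) 0 0)%:~R.
have Hlow z : grp_feasible B u tau z -> rho <= (grp_obj c B z)%:~R.
  move=> Hz.
  pose x := u - B *m z.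
  have Ax : A *m x = b by rewrite /x mulmxBr mulmxA AB0 mul0mx subr0.
  have Eo : grp_obj c B z = (c *m x) 0 0 - (c *m u) 0 0.
    rewrite /grp_obj /x mulmxBr mulmxA mulNmx.
    by rewrite mxBE mxNE addrAC subrr add0r.
  rewrite Eo intrD intrN lerD2r /rho intr_mul.
  have -> : \sum_p y 0 p * (b p 0)%:~R = \sum_j (y *m realmx R A) 0 j * (x j 0)%:~R.
    under [RHS]eq_bigr do rewrite mxE mulr_suml.
    rewrite exchange_big /=; apply: eq_bigr => p _.
    rewrite -Ax intr_mul mulr_sumr; apply: eq_bigr => j _.
    by rewrite !mxE mulrA.
  apply: ler_sum => j _; have [H1 H2] := Hy j; rewrite colval in H1 H2.
  case Hj: (j \in tau); first by rewrite H1.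
  apply: ler_wpM2r; last by apply/ltW/H2; rewrite Hj.
  by rewrite ler0z /x mxBE subr_ge0; apply: Hz; rewrite Hj.
pose L := Num.floor rho.
have HL z : grp_feasible B u tau z -> L <= grp_obj c B z.
  by move=> Hz; rewrite -(ler_int R); apply: le_trans (floor_le rho) (Hlow z Hz).
apply: NNPP => Hno.
have key : forall m : nat, forall z, grp_feasible B u tau z ->
    grp_obj c B z - L = m%:Z -> False.
  elim/ltn_ind => m IH z Hz Hm; apply: Hno; exists z; split => // z' Hz'.
  case: (leP (grp_obj c B z) (grp_obj c B z')) => // Hlt; exfalso.
  have H0 : 0 <= grp_obj c B z' - L by rewrite subr_ge0 HL.
  apply: (IH `|grp_obj c B z' - L|%N _ z' Hz'); last by rewrite gez0_abs.
  by rewrite -(ltz_nat) gez0_abs // -Hm ltrD2r.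
have Hz0 : grp_feasible B u tau 0 by move=> j _; rewrite mulmx0 mxE.
apply: (key `|grp_obj c B 0 - L|%N 0 Hz0); rewrite gez0_abs // subr_ge0.
exact: HL.
Qed.
Lemma strictify (R : realType) d n (A : 'M[int]_(d,n)) (c : 'rV[int]_n)
   (tau : {set 'I_n}) (y : 'rV[R]_d) :
 generic_cost R A c ->
 (forall j, j \in tau -> (y *m realmx R A) 0 j = (c 0 j)%:~R) ->
 (forall j, (y *m realmx R A) 0 j <= (c 0 j)%:~R) ->
 face_Delta R A c tau.
Proof.
move=> gen Htau Hle.
set AR := realmx R A.
pose sigma := [set j | (y *m AR) 0 j == (c 0 j)%:~R].
have Fs : face_Delta R A c sigma.
  exists y => j; rewrite !colval inE; split; first by move/eqP.
  by rewrite lt_neqAle Hle andbT.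
have indep := gen sigma Fs.
pose Dm := diag_mx (\row_j ((j \in sigma)%:R : R)).
pose M := AR *m Dm.
pose t : 'rV[R]_n := \row_j ((j \in sigma) && (j \notin tau))%:R.
have : (t <= M)%MS.
  rewrite submxE; apply/eqP/matrixP => i j; rewrite !mxE.
  set K := cokermx M.
  have HK : M *m col j K = 0 by rewrite mul_col mulmx_coker; apply/matrixP => a b; rewrite !mxE.
  have HD : Dm *m col j K = 0.
    apply: indep; last by rewrite mulmxA.
    by move=> l Hl; rewrite mul_diag_mx !mxE (negbTE Hl) mul0r.
  apply: big1 => l _; rewrite !mxE.
  case Hl: (l \in sigma) => /=; last by rewrite mul0r.
  move/matrixP/(_ l 0): HD; rewrite mul_diag_mx !mxE Hl mul1r => ->.
  by rewrite mulr0.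
case/submxP => w Ew.
have Hw j : j \in sigma -> (w *m AR) 0 j = t 0 j.
  move=> Hj; rewrite Ew /M mulmxA mul_mx_diag !mxE Hj mulr1 //.
pose P := fun j => j \notin sigma.
have [|e [He1 He2]] := @small_pos R _ P
   (fun j => ((c 0 j)%:~R - (y *m AR) 0 j) / (1 + `|(w *m AR) 0 j|)).
  move=> j Hj; apply: divr_gt0; last by rewrite ltr_pwDl.
  rewrite subr_gt0 lt_neqAle Hle andbT.
  by move: Hj; rewrite /P inE.
exists (y - e *: w) => j.
have Ev : forall X Y : 'rV[R]_n, (X - e *: Y) 0 j = X 0 j - e * Y 0 j.
  by move=> X Y; rewrite !mxE.
rewrite colval mulmxBl -scalemxAl Ev -/AR.
split.
  move=> Hj; have Hs : j \in sigma by rewrite inE Htau.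
  by rewrite Hw // /t [X in e * X]mxE Hj andbF mulr0 subr0; exact: Htau.
move=> Hj; case Hs: (j \in sigma).
  rewrite Hw // /t [X in e * X]mxE Hs Hj mulr1; move: Hs; rewrite inE => /eqP ->.
  by rewrite ltrBlDr ltrDl.
have := He2 j (negbT Hs); rewrite ler_pdivlMr ?ltr_pwDl // => H.
set a := (w *m AR) 0 j in H *; set b := (y *m AR) 0 j in H *.
have : - a <= `|a| by rewrite -normrN ler_norm.
nra.
Qed.

Lemma clear_den m (f : 'I_m -> rat) :
  exists N : int, 0 < N /\ exists zf : 'I_m -> int, forall l, (zf l)%:~R = N%:~R * f l.
Proof.
exists (\prod_l denq (f l)); split; first by apply: prodr_gt0 => l _; exact: denq_gt0.
exists (fun l => numq (f l) * \prod_(l' | l' != l) denq (f l')) => l.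
rewrite [in RHS](bigD1 l) //= !intrM numqE; ring.
Qed.

Lemma opt_face (R : realType) d n k (A : 'M[int]_(d,n)) (c : 'rV[int]_n)
  (B : 'M[int]_(n,k)) (u : 'cV[int]_n) (tau : {set 'I_n}) :
  generic_cost R A c -> kernel_lattice_basis A B ->
  grp_has_finite_opt c B u tau -> face_Delta R A c tau.
Proof.
move=> gen [AB0 Hker Hinj] [z0 [Hz0 Hmin]].
pose aQ (i : 'I_n) (l : 'I_k) : rat := if i \in tau then 0 else (B i l)%:~R.
pose gQ l : rat := ((c *m B) 0 l)%:~R.
have HF : forall r : 'I_k -> rat, (forall i, \sum_l aQ i l * r l <= 0) ->
    \sum_l gQ l * r l <= 0.
  move=> r Hr; have [N [HN [zf Hzf]]] := clear_den r.
  pose zr : 'cV[int]_k := \col_l zf l.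
  have HBr j : j \notin tau -> (B *m zr) j 0 <= 0.
    move=> Hj; rewrite -(ler_int rat) intr_mul.
    have := Hr j; rewrite /aQ (negbTE Hj) => H.
    have -> : \sum_l (B j l)%:~R * (zr l 0)%:~R = N%:~R * \sum_l (B j l)%:~R * r l :> rat.
      rewrite mulr_sumr; apply: eq_bigr => l _; rewrite mxE Hzf; ring.
    by rewrite pmulr_rle0 // ltr0z.
  have Hfe : grp_feasible B u tau (z0 + zr).
    move=> j Hj; rewrite mulmxDr mxDE -[u j 0]addr0; apply: lerD; [exact: Hz0|exact: HBr].
  have := Hmin _ Hfe; rewrite /grp_obj mulmxDr mxDE lerDl -(ler_int rat) intr_mul.
  have -> : \sum_l ((- (c *m B)) 0 l)%:~R * (zr l 0)%:~R = - (N%:~R * \sum_l gQ l * r l) :> rat.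
    rewrite mulr_sumr -sumrN; apply: eq_bigr => l _; rewrite mxNE intrN /zr mxE Hzf /gQ; ring.
  by rewrite oppr_ge0 pmulr_rle0 // ltr0z.
have [lam [Hlam0 Hlam]] := farkas HF.
pose mu i : rat := if i \in tau then 0 else lam i.
have Hmu l : \sum_i mu i * (B i l)%:~R = gQ l.
  rewrite -Hlam; apply: eq_bigr => i _; rewrite /mu /aQ; case: (i \in tau) => //.
  by rewrite !mul0r mulr0.
pose AQ := map_mx (fun z : int => z%:~R : rat) A.
pose v : 'rV[rat]_n := \row_i ((c 0 i)%:~R - mu i).
have HvB l : \sum_i v 0 i * (B i l)%:~R = 0.
  under eq_bigr do rewrite mxE mulrBl.
  by rewrite sumrB Hmu /gQ intr_mul subrr.
have Hsub : (v <= AQ)%MS.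
  rewrite submxE; apply/eqP/matrixP => i j; rewrite [RHS]mxE mxE.
  set K := cokermx AQ.
  have HK p : \sum_i (A p i)%:~R * K i j = 0.
    have := mulmx_coker AQ; move/matrixP/(_ p j); rewrite !mxE => E.
    by rewrite -[RHS]E; apply: eq_bigr => l _; congr (_ * _); rewrite mxE.
  have [N [HN [zf Hzf]]] := clear_den (fun i => K i j).
  pose x : 'cV[int]_n := \col_i zf i.
  have Ax : A *m x = 0.
    apply/matrixP => p q; apply: (@intr_inj rat); rewrite intr_mul mxE.
    rewrite -[RHS](mulr0 (N%:~R)) -[in RHS](HK p) mulr_sumr; apply: eq_bigr => l _.
    by rewrite mxE Hzf; ring.
  have [zz Hzz] := Hker x Ax.
  have : N%:~R * \sum_p v 0 p * K p j = 0 :> rat.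
    rewrite mulr_sumr.
    have -> : \sum_p N%:~R * (v 0 p * K p j) = \sum_p v 0 p * (x p 0)%:~R.
      by apply: eq_bigr => p _; rewrite [x p 0]mxE Hzf; ring.
    rewrite Hzz.
    under eq_bigr do rewrite intr_mul mulr_sumr.
    rewrite exchange_big /= big1 // => l _.
    under eq_bigr do rewrite mulrA.
    by rewrite -mulr_suml HvB mul0r.
  rewrite (ord1 i); move/eqP; rewrite mulf_eq0 intr_eq0 (negbTE (lt0r_neq0 HN)) /=; move/eqP.
  by [].
case/submxP: Hsub => D HD.
pose yR : 'rV[R]_d := map_mx ratr D.
have Hval j : (yR *m realmx R A) 0 j = (c 0 j)%:~R - ratr (mu j).
  have -> : (c 0 j)%:~R - ratr (mu j) = ratr (v 0 j) :> R.
    by rewrite mxE rmorphB /= ratr_int.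
  rewrite HD !mxE rmorph_sum; apply: eq_bigr => p _.
  by rewrite !mxE rmorphM /=; congr (_ * _); rewrite (ratr_int R (A p j)).
apply: (strictify (y := yR) gen) => j.
  by move=> Hj; rewrite Hval /mu Hj rmorph0 subr0.
rewrite Hval lerBlDr lerDl ler0q /mu; case: (j \in tau) => //.
Qed.

Unset Implicit Arguments.
Set Strict Implicit.

Theorem theorem2p7 (R : realType) (d n : nat) (A : 'M[int]_(d, n))
    (c : 'rV[int]_n) (B : 'M[int]_(n, n - d)) (b : 'cV[int]_d)
    (u : 'cV[int]_n) (tau : {set 'I_n}) :
  full_row_rank R A ->
  cone_pointed R A ->
  ker_nonneg_trivial R A ->
  lattice_spanning A ->
  generic_cost R A c ->
  kernel_lattice_basis A B ->
  in_NA A b ->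
  (forall j, 0 <= u j 0) -> A *m u = b ->
  (grp_has_finite_opt c B u tau <-> face_Delta R A c tau).
Proof.
move=> _ _ _ _ gen Hk _ u0 Aub; split.
  exact: opt_face gen Hk.
case: Hk => AB0 _ _.
exact: face_opt AB0 u0 Aub.
Qed.
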